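(* Let $n>1$ and let $s=(x_1,\dots,x_n)\in\mathbb{T}_n$ be a unit (i.e. $x_1\neq0$). Writing $(s^{-1})_p$ for the $p$-th component of $s^{-1}$ in $n$-vector format, for every $k\le n$ and every $j<k$, $$\frac{\partial (s^{-1})_k}{\partial x_j}=\frac{\partial (s^{-1})_{k-j+1}}{\partial x_1}.$$
   Context: $\mathbb{T}_n$ is the $n$-dimensional real algebra of upper triangular Toeplitz $n\times n$ matrices under matrix multiplication. An element $s=(x_1,\dots,x_n)\in\mathbb{T}_n$ denotes the upper triangular Toeplitz matrix whose entries on the successive diagonals, starting with the main diagonal and proceeding to the right, are $x_1,\dots,x_n$; equivalently $s=x_1\mathbf{1}+x_2\mathbf{z}+\dots+x_n\mathbf{z}^{n-1}$ where $\mathbf{z}$ has ones on the superdiagonal and zeros elsewhere. The inverse $s^{-1}$ is again in $\mathbb{T}_n$ and is written in the same vector format. *)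

(* Defs.v *)
From HB Require Import structures.
From mathcomp Require Import all_boot all_order all_algebra.
From mathcomp Require Import all_classical all_reals all_analysis.
Set Implicit Arguments. Unset Strict Implicit. Unset Printing Implicit Defensive.
Import Order.TTheory GRing.Theory Num.Theory.
Import numFieldNormedType.Exports.
Local Open Scope ring_scope.

Section Toeplitz.
Variable R : realType.

Definition mxentry (m n : nat) (A : 'M[R]_(m, n)) (i j : nat) : R :=
  match (insub i : option 'I_m), (insub j : option 'I_n) with
  | Some i', Some j' => A i' j'
  | _, _ => 0
  end.

(* Paper's 1-based component x_p of s = (x_1, ..., x_n), stored as a row vector. *)
Definition tcomp (n : nat) (x : 'rV[R]_n) (p : nat) : R := mxentry x 0 p.-1.

(* The upper triangular Toeplitz matrix x_1 1 + x_2 z + ... + x_n z^(n-1):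
   entry (i, j) (0-based) is x_(j-i+1) if i <= j, else 0. *)
Definition toeplitz (n : nat) (x : 'rV[R]_n) : 'M[R]_n :=
  \matrix_(i < n, j < n) (if (i <= j)%N then tcomp x (j - i).+1 else 0).

(* Paper's 1-based p-th component of s^{-1} in vector format: entry (1, p)
   of the inverse matrix (first row of an upper triangular Toeplitz matrix). *)
Definition tinv (n : nat) (x : 'rV[R]_n) (p : nat) : R :=
  mxentry (invmx (toeplitz x)) 0 p.-1.

Definition evec (n : nat) (j : nat) : 'rV[R]_n :=
  \row_(i < n) (if (i : nat) == j.-1 then 1 else 0).

Definition partial (n : nat) (f : 'rV[R]_n -> R) (x : 'rV[R]_n) (j : nat) : R :=
  'D_(evec n j) f x.

End Toeplitz.

(* Main.v *)
Require Import Defs.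
From HB Require Import structures.
From mathcomp Require Import all_boot all_order all_algebra.
From mathcomp Require Import all_classical all_reals all_analysis.
From mathcomp Require Import zify.
Import Order.TTheory GRing.Theory Num.Theory.
Import numFieldNormedType.Exports.
Local Open Scope ring_scope.
Local Open Scope classical_set_scope.

Section Lim.
Variable R : realType.
Variable T : Type.
Variable F : set_system T.
Hypothesis FF : Filter F.

Lemma cvg_bsum (I : Type) (r : seq I) (P : pred I) (f : I -> T -> R) (a : I -> R) :
  (forall i, f i h @[h --> F] --> a i) ->
  (\sum_(i <- r | P i) f i h)%R @[h --> F] --> (\sum_(i <- r | P i) a i)%R.
Proof.
move=> H; elim: r => [|i r IH].
  rewrite big_nil; under eq_cvg do rewrite big_nil; exact: cvg_cst.
rewrite big_cons; under eq_cvg do rewrite big_cons.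
case: (P i) => //; exact: cvgD.
Qed.

Lemma cvg_bprod (I : Type) (r : seq I) (P : pred I) (f : I -> T -> R) (a : I -> R) :
  (forall i, f i h @[h --> F] --> a i) ->
  (\prod_(i <- r | P i) f i h)%R @[h --> F] --> (\prod_(i <- r | P i) a i)%R.
Proof.
move=> H; elim: r => [|i r IH].
  rewrite big_nil; under eq_cvg do rewrite big_nil; exact: cvg_cst.
rewrite big_cons; under eq_cvg do rewrite big_cons.
case: (P i) => //; exact: cvgM.
Qed.

Lemma cvg_det m (M : T -> 'M[R]_m) (A : 'M[R]_m) :
  (forall i j, M h i j @[h --> F] --> A i j) ->
  \det (M h) @[h --> F] --> \det A.
Proof.
move=> H; rewrite /determinant; under eq_cvg do rewrite /determinant.
apply: cvg_bsum => s; apply: cvgMl_tmp; apply: cvg_bprod => i; exact: H.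
Qed.

Lemma cvg_adj m (M : T -> 'M[R]_m) (A : 'M[R]_m) :
  (forall i j, M h i j @[h --> F] --> A i j) ->
  forall i j, \adj (M h) i j @[h --> F] --> \adj A i j.
Proof.
move=> H i j; rewrite mxE; under eq_cvg do rewrite mxE.
rewrite /cofactor; apply: cvgMl_tmp; apply: cvg_det => a b.
rewrite !mxE; under eq_cvg do rewrite !mxE; exact: H.
Qed.

Lemma cvg_invmx m (M : T -> 'M[R]_m) (A : 'M[R]_m) :
  (forall i j, M h i j @[h --> F] --> A i j) -> A \in unitmx ->
  forall i j, invmx (M h) i j @[h --> F] --> invmx A i j.
Proof.
move=> H uA i j.
have dA : \det (M h) @[h --> F] --> \det A by exact: cvg_det.
have dA0 : \det A != 0 by rewrite -unitfE -unitmxE.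
have nz : \forall h \near F, \det (M h) != 0 by apply: cvgr_neq0 dA dA0.
rewrite /invmx uA mxE.
have c : (fun h => (\det (M h))^-1 * \adj (M h) i j) @ F --> (\det A)^-1 * \adj A i j.
  by apply: cvgM; [exact: cvgV | exact: cvg_adj].
apply: cvg_trans c.
apply: near_eq_cvg; near=> h.
have hu : M h \in unitmx by rewrite unitmxE unitfE; exact: (near nz h).
by rewrite hu !mxE.
Unshelve. all: by end_near.
Qed.
End Lim.
Section Alg.
Variable R : realType.
Variable n : nat.

Lemma mxentryE m p (A : 'M[R]_(m, p)) i l (hi : (i < m)%N) (hl : (l < p)%N) :
  mxentry A i l = A (Ordinal hi) (Ordinal hl).
Proof.
rewrite /mxentry; case: insubP => [i' _ ei|]; last by rewrite hi.
case: insubP => [l' _ el|]; last by rewrite hl.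
by congr (A _ _); apply: val_inj.
Qed.
Arguments mxentryE {m p} A {i l}.

Definition Zm : 'M[R]_n.+1 := \matrix_(i, l) (((l : nat) == i.+1)%:R : R).

Lemma Zm_mull (A : 'M[R]_n.+1) (i l : 'I_n.+1) (hi : (i.+1 < n.+1)%N) :
  (Zm *m A) i l = A (Ordinal hi) l.
Proof.
rewrite mxE (bigD1 (Ordinal hi)) //= big1 ?addr0; first by rewrite mxE eqxx mul1r.
move=> m hm; rewrite mxE.
have -> : ((m : nat) == i.+1) = false.
  by apply/negbTE; apply: contra hm => /eqP e; apply/eqP/val_inj.
by rewrite mul0r.
Qed.

Lemma Zm_mull0 (A : 'M[R]_n.+1) (i l : 'I_n.+1) : ~~ (i.+1 < n.+1)%N ->
  (Zm *m A) i l = 0.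
Proof.
move=> hi; rewrite mxE big1 // => m _; rewrite mxE.
have -> : ((m : nat) == i.+1) = false.
  apply/negbTE; apply: contra hi => /eqP <-; exact: ltn_ord.
by rewrite mul0r.
Qed.

Lemma Zm_mulr (A : 'M[R]_n.+1) (i l : 'I_n.+1) (hl : (l.-1 < n.+1)%N) :
  (0 < l)%N -> (A *m Zm) i l = A i (Ordinal hl).
Proof.
move=> l0; rewrite mxE (bigD1 (Ordinal hl)) //= big1 ?addr0.
  by rewrite mxE prednK // eqxx mulr1.
move=> m hm; rewrite mxE.
have -> : ((l : nat) == m.+1) = false.
  apply/negbTE; apply: contra hm => /eqP e; apply/eqP/val_inj => /=.
  by rewrite e.
by rewrite mulr0.
Qed.

Lemma Zm_mulr0 (A : 'M[R]_n.+1) (i l : 'I_n.+1) : (l : nat) = 0%N ->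
  (A *m Zm) i l = 0.
Proof. by move=> l0; rewrite mxE big1 // => m _; rewrite mxE l0 mulr0. Qed.

Lemma toeplitzE (a : 'rV[R]_n.+1) (i l : 'I_n.+1) (h : ((l - i)%N < n.+1)%N) :
  toeplitz a i l = if (i <= l)%N then a 0 (Ordinal h) else 0.
Proof. by rewrite mxE /tcomp /= (mxentryE _ (ltn0Sn 0) h). Qed.

Lemma toeplitzZm (a : 'rV[R]_n.+1) : toeplitz a *m Zm = Zm *m toeplitz a.
Proof.
apply/matrixP => i l.
have hli : forall (i l : 'I_n.+1), ((l - i)%N < n.+1)%N.
  by move=> i0 l0; apply: leq_ltn_trans (leq_subr _ _) (ltn_ord _).
case: (posnP l) => [l0|l0].
  rewrite Zm_mulr0 //; case hi: (i.+1 < n.+1)%N; last by rewrite Zm_mull0 ?hi.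
  rewrite Zm_mull (toeplitzE _ _ _ (hli _ _)) /=.
  by have -> : (i < l)%N = false by rewrite l0.
have hl : (l.-1 < n.+1)%N by apply: leq_ltn_trans (leq_pred _) (ltn_ord _).
rewrite Zm_mulr //; case hi: (i.+1 < n.+1)%N; last first.
  rewrite Zm_mull0 ?hi // (toeplitzE _ _ _ (hli _ _)) /=.
  have -> : (i <= l.-1)%N = false.
    by move/negbT: hi; move: (ltn_ord l) (ltn_ord i) l0; lia.
  by [].
rewrite Zm_mull (toeplitzE _ _ _ (hli _ _)) (toeplitzE _ _ _ (hli _ _)) /=.
have -> : (i <= l.-1)%N = (i < l)%N by rewrite -ltnS prednK.
case: (i < l)%N => //; congr (a _ _); apply: val_inj => /=.
lia.
Qed.


Lemma sum_deltal (f : 'I_n.+1 -> R) c (hc : (c < n.+1)%N) :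
  \sum_(m < n.+1) ((m : nat) == c)%:R * f m = f (Ordinal hc).
Proof.
rewrite (bigD1 (Ordinal hc)) //= eqxx mul1r big1 ?addr0 // => m hm.
have -> : ((m : nat) == c) = false.
  by apply/negbTE; apply: contra hm => /eqP e; apply/eqP/val_inj.
by rewrite mul0r.
Qed.

Lemma sum_deltar (f : 'I_n.+1 -> R) c d (hc : (c < n.+1)%N) :
  \sum_(m < n.+1) f m * ((c + d)%N == (m + d)%N)%:R = f (Ordinal hc).
Proof.
rewrite (bigD1 (Ordinal hc)) //= eqxx mulr1 big1 ?addr0 // => m hm.
have -> : ((c + d)%N == (m + d)%N) = false.
  apply/negbTE; apply: contra hm; rewrite eqn_add2r => /eqP e; apply/eqP/val_inj.
  by rewrite /= e.
by rewrite mulr0.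
Qed.

Lemma Zm_pow p (i l : 'I_n.+1) : (Zm ^+ p) i l = ((l : nat) == (i + p)%N)%:R.
Proof.
elim: p i l => [|p IH] i l.
  rewrite expr0 mxE addn0; case: eqP => [->|ne]; first by rewrite eqxx.
  by case: eqP => // e; case: ne; apply: val_inj.
rewrite exprSr -mulmxE.
case: (posnP l) => [l0|l0].
  by rewrite Zm_mulr0 // l0 addnS.
have hl : (l.-1 < n.+1)%N by apply: leq_ltn_trans (leq_pred _) (ltn_ord _).
rewrite Zm_mulr // IH /=.
by congr (_ %:R); apply/eqP/eqP; lia.
Qed.

Lemma toeplitz_evec j : toeplitz (@evec R n.+1 j) = Zm ^+ j.-1.
Proof.
apply/matrixP => i l.
have hli : ((l - i)%N < n.+1)%N by apply: leq_ltn_trans (leq_subr _ _) (ltn_ord _).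
rewrite (toeplitzE _ _ _ hli) Zm_pow mxE /=.
case: leqP => hil.
  have -> : ((l - i)%N == j.-1) = ((l : nat) == (i + j.-1)%N) by apply/eqP/eqP; lia.
  by case: (_ == _).
by have -> : ((l : nat) == (i + j.-1)%N) = false by apply/negbTE; apply/eqP; lia.
Qed.

Lemma toeplitz_lin (h : R) (e y : 'rV[R]_n.+1) :
  toeplitz (h *: e + y) = h *: toeplitz e + toeplitz y.
Proof.
apply/matrixP => i l.
have hli : ((l - i)%N < n.+1)%N by apply: leq_ltn_trans (leq_subr _ _) (ltn_ord _).
rewrite !mxE /tcomp /= !(mxentryE _ (ltn0Sn 0) hli).
by case: leqP => _; rewrite ?mxE ?mulr0 ?addr0.
Qed.

Lemma toeplitz_unit (y : 'rV[R]_n.+1) : y 0 0 != 0 -> toeplitz y \in unitmx.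
Proof.
move=> y0; rewrite unitmxE unitfE -det_tr det_trig.
  rewrite prodf_seq_neq0; apply/allP => i _ /=; rewrite mxE.
  rewrite (toeplitzE _ _ _ (leq_ltn_trans (leq_subr _ _) (ltn_ord i))) /= leqnn.
  by move: y0; congr (_ _ _ != 0); apply: val_inj; rewrite /= subnn.
apply/is_trig_mxP => i l hil; rewrite mxE.
have hli : ((i - l)%N < n.+1)%N by apply: leq_ltn_trans (leq_subr _ _) (ltn_ord _).
by rewrite (toeplitzE _ _ _ hli) leqNgt hil.
Qed.

End Alg.

Section Deriv.
Variable R : realType.
Variable n : nat.

Lemma inv_diff (h : R) (N T : 'M[R]_n.+1) : T \in unitmx -> (h *: N + T) \in unitmx ->
  invmx (h *: N + T) = invmx T - h *: (invmx T *m N *m invmx (h *: N + T)).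
Proof.
move=> uT uh.
set A := invmx (h *: N + T); set Ti := invmx T.
have e1 : Ti *m ((h *: N + T) *m A) = Ti by rewrite mulmxV // mulmx1.
rewrite mulmxA mulmxDr mulVmx // -scalemxAr mulmxDl mul1mx -scalemxAl in e1.
by rewrite -{1}e1 addrAC subrr add0r.
Qed.

Lemma dq_cvg (N T : 'M[R]_n.+1) (K : 'I_n.+1) : T \in unitmx ->
  (fun h : R => h^-1 * (invmx (h *: N + T) 0 K - invmx T 0 K)) @ 0^' -->
  - (invmx T *m N *m invmx T) 0 K.
Proof.
move=> uT.
have cE : forall a b, (h *: N + T) a b @[h --> 0^'] --> T a b.
  move=> a b; under eq_cvg do rewrite !mxE.
  apply: cvg_within_filter.
  have c0 : (h * N a b + T a b) @[h --> nbhs (0:R)] --> 0 * N a b + T a b.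
    by apply: cvgD; [apply: cvgMr_tmp; exact: cvg_id | exact: cvg_cst].
  by rewrite mul0r add0r in c0.
have cA : forall a b, invmx (h *: N + T) a b @[h --> 0^'] --> invmx T a b by apply: cvg_invmx.
have cd : \det (h *: N + T) @[h --> 0^'] --> \det T by exact: cvg_det.
have dT : \det T != 0 by rewrite -unitfE -unitmxE.
have nz : \forall h \near 0^', \det (h *: N + T) != 0 by apply: cvgr_neq0 cd dT.
have c : (fun h => - \sum_l (invmx T *m N) 0 l * invmx (h *: N + T) l K) @ 0^' -->
   - (invmx T *m N *m invmx T) 0 K.
  rewrite mxE; apply: cvgN; apply: cvg_bsum => l; apply: cvgMl_tmp; exact: cA.
apply: cvg_trans c; apply: near_eq_cvg; near=> h.
have hu : (h *: N + T) \in unitmx by rewrite unitmxE unitfE; exact: (near nz h).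
have h0 : h != 0 by exact: (near (nbhs_dnbhs_neq 0) h).
rewrite [in RHS](inv_diff _ _ _ uT hu) !mxE.
by rewrite addrAC subrr add0r mulrN mulrA mulVf // mul1r.

Unshelve. all: by end_near.
Qed.
End Deriv.


Section Main.
Variable R : realType.
Variable n : nat.

Lemma final_alg (y : 'rV[R]_n.+1) (K K' : 'I_n.+1) d : toeplitz y \in unitmx ->
  (K : nat) = (K' + d)%N ->
  (invmx (toeplitz y) *m Zm R n ^+ d *m invmx (toeplitz y)) 0 K =
  (invmx (toeplitz y) *m invmx (toeplitz y)) 0 K'.
Proof.
move=> uT eK.
have cT : GRing.comm (toeplitz y) (Zm R n) by rewrite /GRing.comm -!mulmxE toeplitzZm.
have cTi : GRing.comm (invmx (toeplitz y)) (Zm R n ^+ d).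
  apply: commrX; apply/commr_sym; apply: commrV; exact/commr_sym.
have e : Zm R n ^+ d *m invmx (toeplitz y) = invmx (toeplitz y) *m Zm R n ^+ d by exact: (esym cTi).
rewrite -mulmxA e mulmxA.
rewrite mxE (eq_bigr (fun m => (invmx (toeplitz y) *m invmx (toeplitz y)) 0 m * ((K' + d)%N == (m + d)%N)%:R)).
  rewrite (sum_deltar _ _ _ _ _ (ltn_ord K')); congr (_ _ _); exact: val_inj.
by move=> m _; rewrite Zm_pow eK.
Qed.

Lemma tinv_eq (y : 'rV[R]_n.+1) k (hk : (k.-1 < n.+1)%N) :
  tinv y k = invmx (toeplitz y) 0 (Ordinal hk).
Proof. by rewrite /tinv (@mxentryE R _ _ _ _ _ (ltn0Sn n) hk). Qed.

Lemma partial_eq (x : 'rV[R]_n.+1) k j (hk : (k.-1 < n.+1)%N) :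
  x 0 0 != 0 ->
  partial (fun y : 'rV[R]_n.+1 => tinv y k) x j =
  - (invmx (toeplitz x) *m Zm R n ^+ j.-1 *m invmx (toeplitz x)) 0 (Ordinal hk).
Proof.
move=> x0; rewrite /partial /derive.
have -> : (fun h : R => h^-1 *: (((fun y => tinv y k) \o shift x) (h *: @evec R n.+1 j) - tinv x k))
  = (fun h : R => h^-1 * (invmx (h *: Zm R n ^+ j.-1 + toeplitz x) 0 (Ordinal hk)
        - invmx (toeplitz x) 0 (Ordinal hk))).
  apply/funext => h /=.
  by rewrite !tinv_eq toeplitz_lin toeplitz_evec.
apply: cvg_lim; first exact: Rhausdorff.
apply: dq_cvg; exact: toeplitz_unit.
Qed.
End Main.

Theorem lemma10p3 (R : realType) (n : nat) (x : 'rV[R]_n)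
  (hn : (1 < n)%N) (hunit : tcomp x 1 != 0) (k j : nat)
  (hj1 : (1 <= j)%N) (hjk : (j < k)%N) (hkn : (k <= n)%N) :
  partial (fun y : 'rV[R]_n => tinv y k) x j
  = partial (fun y : 'rV[R]_n => tinv y (k - j + 1)) x 1.
Proof.
case: n x hn hkn hunit => [//|n] x hn hkn hunit.
have x0 : x 0 0 != 0.
  by move: hunit; rewrite /tcomp (@mxentryE R _ _ x 0 0 (ltn0Sn 0) (ltn0Sn n)).
have hk : (k.-1 < n.+1)%N by lia.
have hk' : ((k - j + 1).-1 < n.+1)%N by lia.
rewrite (@partial_eq R n x k j hk x0) (@partial_eq R n x (k - j + 1) 1 hk' x0) /= expr0 mulmx1.
congr (- _); apply: final_alg; first exact: toeplitz_unit.
by rewrite /=; lia.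
Qed.
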